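(* Consider any demand-private coded caching scheme with $N=2$ files and $K=2$ users. Then for every $i\in\{0,1\}$ and $j\in\{0,1\}$, with $\tilde i=(i+1)\bmod 2$, the conditional joint distributions satisfy $(X,Z_1,W_j\mid D_1=j)\sim(X,Z_1,W_j\mid D_0=i,D_1=j)\sim(X,Z_1,W_j\mid D_0=\tilde i,D_1=j)$ and $(X,Z_0,W_j\mid D_0=j)\sim(X,Z_0,W_j\mid D_0=j,D_1=i)\sim(X,Z_0,W_j\mid D_0=j,D_1=\tilde i)$, where $\sim$ denotes equality of (conditional) distributions.
   Context: Setting ($N=K=2$): files $W_0,W_1$ independent, uniform on $[2^F]=\{0,\dots,2^F-1\}$; demands $D_0,D_1$ of users $0,1$ independent and uniform on $\{0,1\}$. User $k$ shares a key $S_k$ (finite alphabet) with the server; the server has private randomness $P$ (finite alphabet); $P,S_0,S_1,D_0,D_1,W_0,W_1$ are mutually independent. Cache content $Z_k=(C_k(S_k,P,W_0,W_1),S_k)$ with $C_k$ valued in $[2^{MF}]$; broadcast $X=(E(W_0,W_1,D_0,D_1,P,S_0,S_1),J(D_0,D_1,P,S_0,S_1))$ with $E$ valued in $[2^{RF}]$ and $J$ valued in a finite set of negligible $\log_2$-size relative to $F$. The scheme is demand-private if (decodability) $W_{D_k}$ is a deterministic function of $(D_k,S_k,X,Z_k)$ for each $k$, and (privacy) $I(D_1;Z_0,X,D_0)=0$ and $I(D_0;Z_1,X,D_1)=0$. *)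

(* Defs.v *)
From mathcomp Require Import all_boot all_order all_algebra.
From mathcomp Require Import reals exp.
Set Implicit Arguments. Unset Strict Implicit. Unset Printing Implicit Defensive.
Import Order.TTheory GRing.Theory Num.Theory.
Local Open Scope ring_scope.

Definition is_pmf (R : realType) (T : finType) (p : T -> R) : Prop :=
  (forall t, 0 <= p t) /\ \sum_(t : T) p t = 1.

Definition prob (R : realType) (Om : finType) (mu : Om -> R) (E : pred Om) : R :=
  \sum_(w : Om | E w) mu w.

Definition cprob (R : realType) (Om : finType) (mu : Om -> R) (E C : pred Om) : R :=
  prob mu (predI E C) / prob mu C.

Definition mutinf (R : realType) (Om : finType) (mu : Om -> R)
    (A B : finType) (f : Om -> A) (g : Om -> B) : R :=
  \sum_(a : A) \sum_(b : B)
    (let pab := prob mu (fun w => (f w == a) && (g w == b)) in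
     if pab == 0 then 0
     else pab * ln (pab / (prob mu (fun w => f w == a) * prob mu (fun w => g w == b)))).

Definition file (F : nat) := 'I_(2 ^ F).

Definition Omega (TP TS0 TS1 : finType) (F : nat) : finType :=
  (TP * TS0 * TS1 * ('I_2 * 'I_2) * (file F * file F))%type.

Section Accessors.
Variables (TP TS0 TS1 : finType) (F : nat).
Definition omP (w : Omega TP TS0 TS1 F) : TP := w.1.1.1.1.
Definition omS0 (w : Omega TP TS0 TS1 F) : TS0 := w.1.1.1.2.
Definition omS1 (w : Omega TP TS0 TS1 F) : TS1 := w.1.1.2.
Definition omD0 (w : Omega TP TS0 TS1 F) : 'I_2 := w.1.2.1.
Definition omD1 (w : Omega TP TS0 TS1 F) : 'I_2 := w.1.2.2.
Definition omW0 (w : Omega TP TS0 TS1 F) : file F := w.2.1.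
Definition omW1 (w : Omega TP TS0 TS1 F) : file F := w.2.2.
Definition omW (j : 'I_2) (w : Omega TP TS0 TS1 F) : file F :=
  if j == ord0 then omW0 w else omW1 w.
End Accessors.

Definition joint (R : realType) (TP TS0 TS1 : finType) (F : nat)
    (pP : TP -> R) (pS0 : TS0 -> R) (pS1 : TS1 -> R)
    (w : Omega TP TS0 TS1 F) : R :=
  pP (omP w) * pS0 (omS0 w) * pS1 (omS1 w)
  * (4%:R)^-1 * (((2 ^ F) * (2 ^ F))%N%:R)^-1.

Definition bcast (TP TS0 TS1 TE TJ : finType) (F : nat)
    (E : file F -> file F -> 'I_2 -> 'I_2 -> TP -> TS0 -> TS1 -> TE)
    (J : 'I_2 -> 'I_2 -> TP -> TS0 -> TS1 -> TJ)
    (w : Omega TP TS0 TS1 F) : TE * TJ :=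
  (E (omW0 w) (omW1 w) (omD0 w) (omD1 w) (omP w) (omS0 w) (omS1 w),
   J (omD0 w) (omD1 w) (omP w) (omS0 w) (omS1 w)).

Definition cache0 (TP TS0 TS1 TC0 : finType) (F : nat)
    (C0 : TS0 -> TP -> file F -> file F -> TC0)
    (w : Omega TP TS0 TS1 F) : TC0 * TS0 :=
  (C0 (omS0 w) (omP w) (omW0 w) (omW1 w), omS0 w).
Definition cache1 (TP TS0 TS1 TC1 : finType) (F : nat)
    (C1 : TS1 -> TP -> file F -> file F -> TC1)
    (w : Omega TP TS0 TS1 F) : TC1 * TS1 :=
  (C1 (omS1 w) (omP w) (omW0 w) (omW1 w), omS1 w).

Definition flip2 (i : 'I_2) : 'I_2 := inord ((i + 1) %% 2).

(* Main.v *)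
Require Import Defs.
From mathcomp Require Import all_boot all_order all_algebra.
From mathcomp Require Import reals exp.
From mathcomp Require Import ring lra.
Import Order.TTheory GRing.Theory Num.Theory.
Local Open Scope ring_scope.

Section Gen.
Variable R : realType.

Lemma ln_le1 {s : R} : 0 < s -> ln s <= s - 1.
Proof. move=> s0; have := expR_ge1Dx (ln s); rewrite lnK ?posrE // => h.
by rewrite lerBrDl. Qed.

Lemma ln_eq1 {s : R} : 0 < s -> ln s = s - 1 -> s = 1.
Proof. move=> s0 e; apply/eqP; rewrite -ln_eq0 //; apply/negPn/negP => h.
have := expR_gt1Dx h; rewrite lnK ?posrE // e. by rewrite addrC subrK ltxx. Qed.

Variable Om : finType.
Variable mu : Om -> R.
Hypothesis mu0 : forall w, 0 <= mu w.
Hypothesis mu1 : \sum_w mu w = 1.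

Lemma prob_ge0 E : 0 <= prob mu E.
Proof. by apply: sumr_ge0 => w _. Qed.

Lemma prob_sub (E1 E2 : pred Om) : (forall w, E1 w -> E2 w) -> prob mu E1 <= prob mu E2.
Proof. move=> h; rewrite /prob (big_mkcond E1) (big_mkcond E2) /=.
apply: ler_sum => w _; case: ifP => e1; first by rewrite h.
by case: ifP. Qed.

Lemma sum_cond (A : finType) (f : Om -> A) : \sum_a prob mu (fun w => f w == a) = 1.
Proof. rewrite -mu1 (partition_big f xpredT) //=. Qed.

Lemma sum_pair (A B : finType) (G : A * B -> R) : \sum_p G p = \sum_a \sum_b G (a, b).
Proof. by rewrite pair_big; apply: eq_bigr => -[a b]. Qed.

Lemma sum_cond2 (A B : finType) (f : Om -> A) (g : Om -> B) :
  \sum_a \sum_b prob mu (fun w => (f w == a) && (g w == b)) = 1.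
Proof. rewrite -(@sum_cond _ (fun w => (f w, g w))) sum_pair.
by apply: eq_bigr => a _; apply: eq_bigr => b _; apply: eq_bigl => w. Qed.

Lemma mutinf0_indep (A B : finType) (f : Om -> A) (g : Om -> B) :
  mutinf mu f g = 0 -> forall a b,
  prob mu (fun w => (f w == a) && (g w == b)) = prob mu (fun w => f w == a) * prob mu (fun w => g w == b).
Proof.
move=> hI.
set pab := fun a b => prob mu (fun w => (f w == a) && (g w == b)).
set pa := fun a => prob mu (fun w => f w == a).
set pb := fun b => prob mu (fun w => g w == b).
have pab_a a b : pab a b <= pa a by apply: prob_sub => w /andP[].
have pab_b a b : pab a b <= pb b by apply: prob_sub => w /andP[].
pose t a b := (if pab a b == 0 then 0 else pab a b * ln (pab a b / (pa a * pb b)))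
   + (pa a * pb b - pab a b).
have tpos a b : pab a b != 0 -> t a b = pab a b * (pa a * pb b / pab a b - 1 - ln (pa a * pb b / pab a b))
  /\ 0 < pa a * pb b / pab a b.
  move=> nz.
  have p0 : 0 < pab a b by rewrite lt0r nz prob_ge0.
  have pa0 : 0 < pa a by apply: lt_le_trans (pab_a a b).
  have pb0 : 0 < pb b by apply: lt_le_trans (pab_b a b).
  have s0 : 0 < pa a * pb b / pab a b by rewrite divr_gt0 // mulr_gt0.
  split => //.
  rewrite /t (negbTE nz) -[pab a b / _]invf_div lnV ?posrE //.
  rewrite !mulrBr mulrCA divff // mulr1 mulr1; lra.
have t0 a b : 0 <= t a b.
  case: (eqVneq (pab a b) 0) => [e|nz].
    rewrite /t e eqxx add0r subr0; apply: mulr_ge0; apply: prob_ge0.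
  have [-> s0] := tpos a b nz.
  apply: mulr_ge0; first exact: prob_ge0.
  by have := ln_le1 s0; lra.
have st : \sum_a \sum_b t a b = 0.
  have e1 : \sum_a \sum_b (pa a * pb b) = 1.
    under eq_bigr do rewrite -mulr_sumr.
    by rewrite -mulr_suml !sum_cond mulr1.
  have e2 := @sum_cond2 _ _ f g.
  rewrite /t.
  under eq_bigr do rewrite big_split /= sumrB.
  rewrite big_split /= sumrB.
  move: hI; rewrite /mutinf /= => ->.
  by rewrite e1 e2 subrr addr0.
move=> a b.
have ta : t a b = 0.
  have h := psumr_eq0P (P := xpredT) (fun a _ => sumr_ge0 _ (fun b _ => t0 a b)) st.
  have h2 := h a isT.
  exact: (psumr_eq0P (fun b _ => t0 a b) h2).
case: (eqVneq (pab a b) 0) => [e|nz].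
  move: ta; rewrite /t e eqxx add0r subr0 => ->. exact: e.
have [e s0] := tpos a b nz.
have p0 : 0 < pab a b by rewrite lt0r nz prob_ge0.
move: ta; rewrite e => /eqP; rewrite mulf_eq0 (negbTE nz) /= subr_eq0 => /eqP h.
have e' := ln_eq1 s0 (esym h).
have : pa a * pb b = (pa a * pb b / pab a b) * pab a b by rewrite divfK.
by rewrite e' mul1r.
Qed.
End Gen.

Lemma probD (R : realType) (F : nat) (TP TS0 TS1 : finType)
    (pP : TP -> R) (pS0 : TS0 -> R) (pS1 : TS1 -> R) :
  is_pmf pP -> is_pmf pS0 -> is_pmf pS1 ->
  forall E : pred ('I_2 * 'I_2),
  prob (@joint R TP TS0 TS1 F pP pS0 pS1) (fun w => E w.1.2) = (\sum_d (E d)%:R) / 4.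
Proof.
move=> [_ hP] [_ hS0] [_ hS1] E.
rewrite /prob big_mkcond /=.
rewrite /Omega.
rewrite sum_pair.
have inner t d : \sum_(f : file F * file F) (if E d then joint pP pS0 pS1 (t, d, f) else 0)
   = (E d)%:R * (pP t.1.1 * pS0 t.1.2 * pS1 t.2 / 4).
  case: (E d) => /=; last by rewrite big1 // mul0r.
  rewrite mul1r; rewrite /joint /omP /omS0 /omS1 /= sumr_const card_prod !card_ord.
  rewrite -[_ *+ (2^F * 2^F)]mulr_natr mulfVK // pnatr_eq0 -lt0n muln_gt0 expn_gt0 //.
rewrite (eq_bigr (fun u => (E u.2)%:R * (pP u.1.1.1 * pS0 u.1.1.2 * pS1 u.1.2 / 4))); last first.
  by move=> [t d] _; rewrite inner.
rewrite sum_pair /=.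
under eq_bigr do rewrite -mulr_suml.
rewrite -mulr_sumr; congr (_ * _).
rewrite -mulr_suml -[RHS]mul1r; congr (_ * _).
rewrite sum_pair /=.
under eq_bigr do rewrite -mulr_sumr hS1 mulr1.
rewrite sum_pair /=; under eq_bigr do rewrite -mulr_sumr hS0 mulr1.
exact: hP.
Qed.

Lemma s1 (R : realType) (i : 'I_2) : \sum_(d : 'I_2 * 'I_2) ((d.1 == i) : nat)%:R = 2 :> R.
Proof.
rewrite sum_pair !big_ord_recl !big_ord0 /=.
by case: i => -[|[|//]] ?; rewrite /= ?eqE /=; lra.
Qed.
Lemma s2 (R : realType) (i : 'I_2) : \sum_(d : 'I_2 * 'I_2) ((d.2 == i) : nat)%:R = 2 :> R.
Proof.
rewrite sum_pair !big_ord_recl !big_ord0 /=.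
by case: i => -[|[|//]] ?; rewrite /= ?eqE /=; lra.
Qed.
Lemma s3 (R : realType) (i j : 'I_2) : \sum_(d : 'I_2 * 'I_2) (((d.1 == i) && (d.2 == j)) : nat)%:R = 1 :> R.
Proof.
rewrite sum_pair !big_ord_recl !big_ord0 /=.
by case: i => -[|[|//]] ?; case: j => -[|[|//]] ?; rewrite /= ?eqE /=; lra.
Qed.
Lemma s4 (R : realType) : \sum_(d : 'I_2 * 'I_2) (true : nat)%:R = 4 :> R.
Proof.
rewrite sum_pair !big_ord_recl !big_ord0 /=. lra.
Qed.

Lemma prob_pos_eq (R : realType) (Om : finType) (mu : Om -> R) (P Q : pred Om) :
  (forall w, 0 <= mu w) -> (forall w, 0 < mu w -> P w = Q w) -> prob mu P = prob mu Q.
Proof.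
move=> mu0 h; rewrite /prob big_mkcond [RHS]big_mkcond; apply: eq_bigr => w _.
have := mu0 w; rewrite le0r => /orP[/eqP->|/h->]; first by case: ifP; case: ifP.
by [].
Qed.

Lemma key (R : realType) (Om B : finType) (mu : Om -> R) (Dt Do : Om -> 'I_2) (Y : Om -> B)
  (ev C : pred Om) (i j : 'I_2) (y : B) (bc : bool) :
 (forall w, 0 <= mu w) ->
 (forall w, 0 < mu w -> ev w && (Do w == j) = (Y w == y) && bc) ->
 (forall w, C w = (Dt w == i) && (Do w == j)) ->
 prob mu (fun w => (Dt w == i) && (Y w == y)) = prob mu (fun w => Dt w == i) * prob mu (fun w => Y w == y) ->
 prob mu (fun w => Do w == j) = 1/2 -> prob mu C = 1/4 -> prob mu (fun w => Dt w == i) = 1/2 ->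
 cprob mu ev (fun w => Do w == j) = cprob mu ev C.
Proof.
move=> mu0 hev hC hind hj hc hi.
rewrite /cprob hj hc.
have e1 : prob mu (predI ev (fun w => Do w == j)) = prob mu (fun w => (Y w == y) && bc).
  apply: (@prob_pos_eq _ _ _ _ _ mu0) => w hw.
  by rewrite /= hev.
have e2 : prob mu (predI ev C) = prob mu (fun w => (Dt w == i) && ((Y w == y) && bc)).
  apply: (@prob_pos_eq _ _ _ _ _ mu0) => w hw; rewrite /= -(hev w hw) hC.
  by case: (ev w); case: (Dt w == i); case: (Do w == j).
rewrite e1 e2.
clear e1 e2 hev; case: bc.
  have -> : prob mu (fun w => (Y w == y) && true) = prob mu (fun w => Y w == y).
    by apply: eq_bigl => w; rewrite andbT.
  have -> : prob mu (fun w => (Dt w == i) && ((Y w == y) && true)) = prob mu (fun w => (Dt w == i) && (Y w == y)).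
    by apply: eq_bigl => w; rewrite andbT.
  by rewrite hind hi /prob; field.
have -> : prob mu (fun w => (Y w == y) && false) = 0.
  by rewrite /prob big_pred0 // => w; rewrite andbF.
have -> : prob mu (fun w => (Dt w == i) && ((Y w == y) && false)) = 0.
  by rewrite /prob big_pred0 // => w; rewrite !andbF.
by rewrite !mul0r.
Qed.
Theorem lemma1 (R : realType) (F : nat)
    (TP TS0 TS1 TC0 TC1 TE TJ : finType)
    (pP : TP -> R) (pS0 : TS0 -> R) (pS1 : TS1 -> R)
    (C0 : TS0 -> TP -> file F -> file F -> TC0)
    (C1 : TS1 -> TP -> file F -> file F -> TC1)
    (E : file F -> file F -> 'I_2 -> 'I_2 -> TP -> TS0 -> TS1 -> TE)
    (J : 'I_2 -> 'I_2 -> TP -> TS0 -> TS1 -> TJ) :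
  is_pmf pP -> is_pmf pS0 -> is_pmf pS1 ->
  let mu := @joint R TP TS0 TS1 F pP pS0 pS1 in
  let X := bcast E J in
  let Z0 := cache0 C0 in
  let Z1 := cache1 C1 in
  (* decodability (almost surely) *)
  (exists dec0 : 'I_2 -> TS0 -> TE * TJ -> TC0 * TS0 -> file F,
     forall w, 0 < mu w ->
       dec0 (omD0 w) (omS0 w) (X w) (Z0 w) = omW (omD0 w) w) ->
  (exists dec1 : 'I_2 -> TS1 -> TE * TJ -> TC1 * TS1 -> file F,
     forall w, 0 < mu w ->
       dec1 (omD1 w) (omS1 w) (X w) (Z1 w) = omW (omD1 w) w) ->
  (* privacy *)
  mutinf mu (@omD1 _ _ _ F) (fun w => (Z0 w, X w, omD0 w)) = 0 ->
  mutinf mu (@omD0 _ _ _ F) (fun w => (Z1 w, X w, omD1 w)) = 0 ->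
  forall i j : 'I_2,
  let it := flip2 i in
  (forall (x : TE * TJ) (z : TC1 * TS1) (v : file F),
     let ev := fun w => [&& X w == x, Z1 w == z & omW j w == v] in
     cprob mu ev (fun w => omD1 w == j)
       = cprob mu ev (fun w => (omD0 w == i) && (omD1 w == j)) /\
     cprob mu ev (fun w => (omD0 w == i) && (omD1 w == j))
       = cprob mu ev (fun w => (omD0 w == it) && (omD1 w == j))) /\
  (forall (x : TE * TJ) (z : TC0 * TS0) (v : file F),
     let ev := fun w => [&& X w == x, Z0 w == z & omW j w == v] in
     cprob mu ev (fun w => omD0 w == j)
       = cprob mu ev (fun w => (omD0 w == j) && (omD1 w == i)) /\
     cprob mu ev (fun w => (omD0 w == j) && (omD1 w == i))
       = cprob mu ev (fun w => (omD0 w == j) && (omD1 w == it))).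
Proof.
move=> hP hS0 hS1 mu X Z0 Z1 [dec0 hd0] [dec1 hd1] hI0 hI1 i j it.
have mu0 : forall w, 0 <= mu w.
  move: hP hS0 hS1 => [gP _] [gS0 _] [gS1 _] w.
  rewrite /mu /joint; apply: mulr_ge0; last by rewrite invr_ge0 ler0n.
  apply: mulr_ge0; last by rewrite invr_ge0 ler0n.
  by apply: mulr_ge0; [apply: mulr_ge0|].
have pD := @probD _ F _ _ _ _ _ _ hP hS0 hS1.
have mu1 : \sum_w mu w = 1.
  have := pD (fun _ => true); rewrite /= s4 divff ?pnatr_eq0 // => h; exact: h.
have pA : forall a, prob mu (fun w => omD0 w == a) = 1/2.
  move=> a; have := pD (fun d => d.1 == a); rewrite /= s1 => h.
  by rewrite [LHS]h; field.
have pB : forall a, prob mu (fun w => omD1 w == a) = 1/2.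
  move=> a; have := pD (fun d => d.2 == a); rewrite /= s2 => h.
  by rewrite [LHS]h; field.
have pAB : forall a b, prob mu (fun w => (omD0 w == a) && (omD1 w == b)) = 1/4.
  move=> a b; have := pD (fun d => (d.1 == a) && (d.2 == b)); rewrite /= s3 => h.
  by rewrite [LHS]h.
have ind1 := @mutinf0_indep _ _ _ mu0 mu1 _ _ _ _ hI1.
have ind0 := @mutinf0_indep _ _ _ mu0 mu1 _ _ _ _ hI0.
have P1 : forall i0 x z v,
  cprob mu (fun w => [&& X w == x, Z1 w == z & omW j w == v]) (fun w => omD1 w == j)
  = cprob mu (fun w => [&& X w == x, Z1 w == z & omW j w == v]) (fun w => (omD0 w == i0) && (omD1 w == j)).
  move=> i0 x z v.
  apply: (@key _ _ _ mu (@omD0 _ _ _ F) (@omD1 _ _ _ F) (fun w => (Z1 w, X w, omD1 w)) _ _ i0 j (z, x, j)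
            (dec1 j z.2 x z == v) mu0 _ _ (ind1 i0 (z, x, j)) (pB j) (pAB i0 j) (pA i0)); last by [].
  move=> w hw /=; rewrite !xpair_eqE.
  case: (eqVneq (X w) x) => [<-|nx]; last by rewrite !andbF.
  case: (eqVneq (Z1 w) z) => [<-|nz]; last by rewrite !andbF.
  case: (eqVneq (omD1 w) j) => [ej|nj]; last by rewrite !andbF.
  by rewrite -ej -hd1 // /= !andbT.
have P0 : forall i0 x z v,
  cprob mu (fun w => [&& X w == x, Z0 w == z & omW j w == v]) (fun w => omD0 w == j)
  = cprob mu (fun w => [&& X w == x, Z0 w == z & omW j w == v]) (fun w => (omD0 w == j) && (omD1 w == i0)).
  move=> i0 x z v.
  apply: (@key _ _ _ mu (@omD1 _ _ _ F) (@omD0 _ _ _ F) (fun w => (Z0 w, X w, omD0 w)) _ _ i0 j (z, x, j)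
            (dec0 j z.2 x z == v) mu0 _ _ (ind0 i0 (z, x, j)) (pA j) (pAB j i0) (pB i0)); last first.
    by move=> w; rewrite andbC.
  move=> w hw /=; rewrite !xpair_eqE.
  case: (eqVneq (X w) x) => [<-|nx]; last by rewrite !andbF.
  case: (eqVneq (Z0 w) z) => [<-|nz]; last by rewrite !andbF.
  case: (eqVneq (omD0 w) j) => [ej|nj]; last by rewrite !andbF.
  by rewrite -ej -hd0 // /= !andbT.
split => x z v /=; split.
- exact: P1.
- by rewrite -P1 -P1.
- exact: P0.
- by rewrite -P0 -P0.
Qed.
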